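(* Let $B$ be a unital $C^*$-algebra with a $*$-isomorphism $\psi:B\to M_n\otimes B$ satisfying $\psi(1)=I_n\otimes1$, let $A$ be a maximal abelian $*$-subalgebra of $B$, and let $\phi:A\to\mathbb{C}$ be a unital algebra homomorphism extended to a positive contraction $\phi:B\to\mathbb{C}$. Then for every $c\in C$ and $\epsilon>0$ there is $m\ge1$ such that $\|\kappa_m(\phi_m(c))-c\|<\epsilon$.
   Context: $M_n=M_n(\mathbb{C})$, identity $I_n$. Define $\psi_0=\mathrm{id}_B$, $\psi_{m+1}=(\mathrm{id}^{\otimes m}\otimes\psi)\circ\psi_m:B\to M_n^{\otimes(m+1)}\otimes B$. Define $\kappa_m:M_n^{\otimes m}\to B$ by $\kappa_m(x)=\psi_m^{-1}(x\otimes1)$ and let $C$ be the norm closure of $\bigcup_{m\ge1}\kappa_m(M_n^{\otimes m})$. For $m\ge1$, $\phi_m=(\mathrm{id}^{\otimes m}\otimes\phi)\circ\psi_m:B\to M_n^{\otimes m}$. *)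

(* Defs.v *)
From HB Require Import structures.
From mathcomp Require Import all_boot all_order all_algebra.
From mathcomp Require Import reals.
From mathcomp Require Import complex.
Set Implicit Arguments. Unset Strict Implicit. Unset Printing Implicit Defensive.
Import Order.TTheory GRing.Theory Num.Theory.
Local Open Scope ring_scope.
Local Open Scope complex_scope.

Section CStar.
Variable R : realType.
Local Notation C := R[i].
Variable B : algType C.

Definition is_involution (star : B -> B) : Prop :=
  [/\ (forall x y, star (x + y) = star x + star y),
      (forall (a : C) x, star (a *: x) = (conjc a) *: star x),
      (forall x y, star (x * y) = star y * star x)
    & (forall x, star (star x) = x)].

Definition is_norm (nrm : B -> R) : Prop :=
  [/\ (forall x, 0 <= nrm x),
      (forall x, nrm x = 0 -> x = 0),
      (forall x y, nrm (x + y) <= nrm x + nrm y)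
    & (forall (a : C) x, (nrm (a *: x))%:C = `|a| * (nrm x)%:C)].

Definition is_complete (nrm : B -> R) : Prop :=
  forall u : nat -> B,
    (forall e : R, 0 < e -> exists N : nat, forall p q : nat,
        (N <= p)%N -> (N <= q)%N -> nrm (u p - u q) < e) ->
    exists l : B, forall e : R, 0 < e -> exists N : nat,
        forall p : nat, (N <= p)%N -> nrm (u p - l) < e.

Definition is_unital_cstar (star : B -> B) (nrm : B -> R) : Prop :=
  [/\ is_involution star, is_norm nrm,
      (forall x y, nrm (x * y) <= nrm x * nrm y),
      (forall x, nrm (star x * x) = nrm x ^+ 2)
    & is_complete nrm].

(* M_n (x) B is identified with n x n matrices over B; its involution is the
   entrywise-star conjugate transpose. *)
Definition mx_star (n : nat) (star : B -> B) (M : 'M[B]_n) : 'M[B]_n :=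
  \matrix_(i, j) star (M j i).

Definition is_star_iso (n : nat) (star : B -> B)
    (psi : B -> 'M[B]_n) (psiinv : 'M[B]_n -> B) : Prop :=
  [/\ ((forall x y, psi (x + y) = psi x + psi y) /\
       (forall (a : C) x, psi (a *: x) = map_mx (fun y : B => a *: y) (psi x))),
      (forall x y, psi (x * y) = psi x *m psi y),
      (forall x, psi (star x) = mx_star star (psi x)),
      (cancel psi psiinv /\ cancel psiinv psi)
    & psi 1 = 1%:M].

Definition star_subalg (star : B -> B) (A : B -> Prop) : Prop :=
  [/\ A 0,
      (forall x y, A x -> A y -> A (x + y)),
      (forall (a : C) x, A x -> A (a *: x)),
      (forall x y, A x -> A y -> A (x * y))
    & (forall x, A x -> A (star x))].

Definition abelian_star_subalg (star : B -> B) (A : B -> Prop) : Prop :=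
  star_subalg star A /\ (forall x y, A x -> A y -> x * y = y * x).

Definition masa (star : B -> B) (A : B -> Prop) : Prop :=
  abelian_star_subalg star A /\
  (forall A' : B -> Prop, abelian_star_subalg star A' ->
     (forall x, A x -> A' x) -> forall x, A' x -> A x).

Definition pos_contraction (star : B -> B) (nrm : B -> R) (phi : B -> C) : Prop :=
  [/\ (forall x y, phi (x + y) = phi x + phi y),
      (forall (a : C) x, phi (a *: x) = a * phi x),
      (forall x, 0 <= phi (star x * x))
    & (forall x, `|phi x| <= (nrm x)%:C)].

Definition unital_hom_on (A : B -> Prop) (phi : B -> C) : Prop :=
  phi 1 = 1 /\ (forall x y, A x -> A y -> phi (x * y) = phi x * phi y).

(* Multi-indices for M_n^{(x) m}: idx 0 = unit, idx (m+1) = idx m * 'I_n;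
   the new tensor factor is the last one (just before B).
   An element of M_n^{(x) m} (x) X is a function idx m -> idx m -> X. *)
Fixpoint idx (n m : nat) : Type :=
  if m is m'.+1 then (idx n m' * 'I_n)%type else unit.

(* psi_0 = id, psi_{m+1} = (id^{(x) m} (x) psi) o psi_m. *)
Fixpoint psi_it (n : nat) (psi : B -> 'M[B]_n) (m : nat) :
    B -> idx n m -> idx n m -> B :=
  match m return B -> idx n m -> idx n m -> B with
  | 0 => fun b _ _ => b
  | m'.+1 => fun b ik jl => psi (@psi_it n psi m' b ik.1 jl.1) ik.2 jl.2
  end.

(* psi_m^{-1}: psi_0^{-1} = id, psi_{m+1}^{-1} = psi_m^{-1} o (id^{(x) m} (x) psi^{-1}). *)
Fixpoint psi_it_inv (n : nat) (psiinv : 'M[B]_n -> B) (m : nat) :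
    (idx n m -> idx n m -> B) -> B :=
  match m return (idx n m -> idx n m -> B) -> B with
  | 0 => fun X => X tt tt
  | m'.+1 => fun X =>
      @psi_it_inv n psiinv m' (fun i j => psiinv (\matrix_(k, l) X (i, k) (j, l)))
  end.

(* kappa_m (x) = psi_m^{-1} (x (x) 1) *)
Definition kappa (n : nat) (psiinv : 'M[B]_n -> B) (m : nat)
    (x : idx n m -> idx n m -> C) : B :=
  @psi_it_inv n psiinv m (fun i j => x i j *: 1).

(* phi_m = (id^{(x) m} (x) phi) o psi_m : B -> M_n^{(x) m} *)
Definition phi_it (n : nat) (psi : B -> 'M[B]_n) (phi : B -> C) (m : nat)
    (b : B) : idx n m -> idx n m -> C :=
  fun i j => phi (@psi_it n psi m b i j).

Arguments psi_it {n} psi m b _ _.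
Arguments psi_it_inv {n} psiinv m X.
Arguments kappa {n} psiinv m x.
Arguments phi_it {n} psi phi m b _ _.

(* C = norm closure of the union over m >= 1 of kappa_m (M_n^{(x) m}). *)
Definition in_C (nrm : B -> R) (n : nat) (psiinv : 'M[B]_n -> B) (c : B) : Prop :=
  forall e : R, 0 < e -> exists m : nat, (1 <= m)%N /\
    exists x : idx n m -> idx n m -> C, nrm (kappa psiinv m x - c) < e.

End CStar.

Arguments psi_it {R B n} psi m b _ _.
Arguments psi_it_inv {R B n} psiinv m X.
Arguments kappa {R B n} psiinv m x.
Arguments phi_it {R B n} psi phi m b _ _.

(* Main.v *)
Require Import Defs.
From HB Require Import structures.
From mathcomp Require Import all_boot all_order all_algebra.
From mathcomp Require Import reals.
From mathcomp Require Import complex.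
From mathcomp Require Import ring lra.
From Stdlib Require Import FunctionalExtensionality.
Import Order.TTheory GRing.Theory Num.Theory.
Local Open Scope ring_scope.
Local Open Scope complex_scope.

Fixpoint idxT (n m : nat) : finType :=
  match m with 0 => Finite.clone unit _ | m'.+1 => Finite.clone (idxT n m' * 'I_n)%type _ end.
Fixpoint gI (n m : nat) : idxT n m -> idx n m :=
  match m return idxT n m -> idx n m with 0 => fun _ => tt | m'.+1 => fun p => (gI n m' p.1, p.2) end.
Fixpoint hI (n m : nat) : idx n m -> idxT n m :=
  match m return idx n m -> idxT n m with 0 => fun _ => tt | m'.+1 => fun p => (hI n m' p.1, p.2) end.
Lemma gK n m : cancel (@gI n m) (@hI n m).
Proof. elim: m => [|m IH] /=; first by case. by case=> t a /=; rewrite IH. Qed.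
Lemma hK n m : cancel (@hI n m) (@gI n m).
Proof. elim: m => [|m IH] /=; first by case. by case=> t a /=; rewrite IH. Qed.

Section T.
Variable R : realType.
Lemma bernoulli (x : R) (k : nat) : 0 <= x -> 1 + x *+ k <= (1 + x) ^+ k.
Proof.
move=> x0; elim: k => [|k IH]; first by rewrite expr0 mulr0n addr0.
rewrite exprS mulrS.
have h1 : 0 <= (1 + x) by lra.
have := ler_wpM2l h1 IH.
have : 0 <= x * x *+ k by rewrite mulrn_wge0 // mulr_ge0.
rewrite mulrDr mulr1 mulrDl mul1r -mulrnAr.
lra.
Qed.

Lemma pow_small (t e : R) : 0 <= t -> t < 1 -> 0 < e -> exists N : nat, t ^+ N < e.
Proof.
move=> t0 t1 e0.
have [->|tn0] := eqVneq t 0; first by exists 1%N; rewrite expr1.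
have tp : 0 < t by rewrite lt_neqAle eq_sym tn0 t0.
set u := t^-1 - 1.
have up : 0 < u by rewrite /u subr_gt0 invf_gt1.
set N := Num.Def.archi_bound ((e * u)^-1).
have eup : 0 < (e * u)^-1 by rewrite invr_gt0 mulr_gt0.
have hN := @archi_boundP R ((e * u)^-1) (ltW eup).
exists N.
have hb := @bernoulli u N (ltW up).
have e1 : 1 + u = t^-1 by rewrite /u addrC subrK.
rewrite e1 in hb.
have hpos : 0 < t ^+ N by rewrite exprn_gt0.
have hpos' : 0 < (t ^+ N)^-1 by rewrite invr_gt0.
rewrite -(ltr_pM2r hpos') mulfV ?gt_eqF // -exprVn.
have h : 1 < e * (u *+ N).
  rewrite -mulr_natr mulrA.
  rewrite -(ltr_pM2l eup) mulr1 mulrA mulVf ?mul1r //.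
  by rewrite gt_eqF // mulr_gt0.
nra.
Qed.

Lemma bootstrap (a b c : R) : 0 <= a -> 0 <= b -> 0 <= c ->
  (forall k : nat, a ^+ (2 ^ k) <= c * b ^+ (2 ^ k)) -> a <= b.
Proof.
move=> a0 b0 c0 h.
rewrite leNgt; apply/negP => ba.
have ap : 0 < a := le_lt_trans b0 ba.
set t := b / a.
have t0 : 0 <= t by rewrite /t divr_ge0 // ltW.
have t1 : t < 1 by rewrite /t ltr_pdivrMr // mul1r.
have c1 : 0 < (c + 1)^-1 by rewrite invr_gt0; lra.
have [M hM] := @pow_small t ((c + 1)^-1) t0 t1 c1.
have hk := h M.
set K := (2 ^ M)%N in hk.
have tle : t ^+ K <= t ^+ M.
  apply: ler_wiXn2l => //; first exact: ltW.
  exact: ltnW (ltn_expl _ (isT : (1 < 2)%N)).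
have eb : b = t * a by rewrite /t mulrVK // unitfE gt_eqF.
rewrite eb exprMn mulrA in hk.
have aK : 0 < a ^+ K by rewrite exprn_gt0.
have h1 : 1 <= c * t ^+ K.
  by rewrite -(ler_pM2r aK) mul1r.
have h2 : c * t ^+ K <= c * (c + 1)^-1.
  apply: ler_wpM2l => //; apply: le_trans tle _; exact: ltW.
have h3 : c * (c + 1)^-1 < 1.
  rewrite ltr_pdivrMr ?mul1r; lra.
lra.
Qed.

Lemma sq_le (x y : R) : 0 <= x -> 0 <= y -> x ^+ 2 <= y ^+ 2 -> x <= y.
Proof. move=> x0 y0; rewrite ler_pXn2r //; exact: x0. Qed.
End T.

Section Norm.
Variable R : realType.
Local Notation C := R[i].
Variable B : algType C.
Variables (star : B -> B) (nrm : B -> R).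
Hypothesis H : is_unital_cstar star nrm.

Lemma starD x y : star (x + y) = star x + star y.
Proof. by case: H => -[]. Qed.
Lemma starZ (a : C) x : star (a *: x) = conjc a *: star x.
Proof. by case: H => -[]. Qed.
Lemma starM x y : star (x * y) = star y * star x.
Proof. by case: H => -[]. Qed.
Lemma starK x : star (star x) = x.
Proof. by case: H => -[]. Qed.
Lemma nrm_ge0 x : 0 <= nrm x.
Proof. by case: H => _ [h _ _ _] *; apply: h. Qed.
Lemma nrm_eq0 x : nrm x = 0 -> x = 0.
Proof. by case: H => _ [_ h _ _] *; apply: h. Qed.
Lemma nrmD x y : nrm (x + y) <= nrm x + nrm y.
Proof. by case: H => _ [_ _ h _] *; apply: h. Qed.
Lemma nrmZC (a : C) x : (nrm (a *: x))%:C = `|a| * (nrm x)%:C.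
Proof. by case: H => _ [_ _ _ h] *; apply: h. Qed.
Lemma nrmM x y : nrm (x * y) <= nrm x * nrm y.
Proof. by case: H => _ _ h *; apply: h. Qed.
Lemma nrmC x : nrm (star x * x) = nrm x ^+ 2.
Proof. by case: H => _ _ _ h *; apply: h. Qed.
Lemma nrm_complete : is_complete nrm.
Proof. by case: H => _ _ _ _ h. Qed.

Definition nc (a : C) : R := Num.sqrt (complex.Re a ^+ 2 + complex.Im a ^+ 2).
Lemma normcE' (a : C) : `|a| = (nc a)%:C.
Proof. by rewrite normc_def. Qed.
Lemma nc_ge0 a : 0 <= nc a. Proof. exact: sqrtr_ge0. Qed.
Lemma ncR (r : R) : nc r%:C = `|r|.
Proof. by rewrite /nc /= expr0n /= addr0 sqrtr_sqr. Qed.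

Lemma nrmZ (a : C) x : nrm (a *: x) = nc a * nrm x.
Proof. by apply: complexI; rewrite nrmZC normcE' -rmorphM. Qed.

Lemma nrm0 : nrm 0 = 0.
Proof. by rewrite -(scale0r (0:B)) nrmZ /nc /= expr0n /= addr0 sqrtr0 mul0r. Qed.

Lemma nrmN x : nrm (- x) = nrm x.
Proof.
rewrite -scaleN1r.
have -> : (-1 : C) = ((-1 : R)%:C) by rewrite rmorphN1.
by rewrite nrmZ ncR normrN1 mul1r.
Qed.

Lemma nrmB x y : nrm (x - y) = nrm (y - x).
Proof. by rewrite -nrmN opprB. Qed.

Lemma nrm_star x : nrm (star x) = nrm x.
Proof.
have key : forall y, nrm y <= nrm (star y).
  move=> y; have := nrmM (star y) y; rewrite nrmC expr2 => h.
  have [->|yp] := eqVneq (nrm y) 0; first exact: nrm_ge0.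
  have yp' : 0 < nrm y by rewrite lt_neqAle eq_sym yp nrm_ge0.
  by rewrite -(ler_pM2r yp').
apply/eqP; rewrite eq_le key andbT.
by have := key (star x); rewrite starK.
Qed.

Lemma star1 : star 1 = 1.
Proof.
by rewrite -[star 1]mulr1 -{2}[1](starK) -starM mulr1 starK.
Qed.

Lemma star0 : star 0 = 0.
Proof. by apply: (addrI (star 0)); rewrite -starD !addr0. Qed.

Lemma starN x : star (- x) = - star x.
Proof.
by apply: (addrI (star x)); rewrite -starD !subrr star0.
Qed.

Lemma starB x y : star (x - y) = star x - star y.
Proof. by rewrite starD starN. Qed.

Lemma nrm_proj p : star p = p -> p * p = p -> nrm p <= 1.
Proof.
move=> sp pp; have := nrmC p; rewrite sp pp expr2 => e.
have [->|pn] := eqVneq (nrm p) 0; first exact: ler01.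
have pp' : 0 < nrm p by rewrite lt_neqAle eq_sym pn nrm_ge0.
have : nrm p * 1 = nrm p * nrm p by rewrite mulr1.
by move/(mulfI pn) => <-.
Qed.

Lemma nrm1 : nrm 1 <= 1.
Proof. by apply: nrm_proj; rewrite ?star1 ?mulr1. Qed.

Lemma nrm_small x : (forall e : R, 0 < e -> nrm x <= e) -> x = 0.
Proof.
move=> h; apply: nrm_eq0; apply/eqP; rewrite eq_le nrm_ge0 andbT.
by apply/ler_addgt0Pr => e /h; rewrite add0r.
Qed.

Lemma nrm_sum (I : Type) (r : seq I) (F : I -> B) :
  nrm (\sum_(i <- r) F i) <= \sum_(i <- r) nrm (F i).
Proof.
elim: r => [|a r IH]; first by rewrite !big_nil nrm0.
rewrite !big_cons; apply: le_trans (nrmD _ _) _; exact: lerD.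
Qed.


Definition hlf : C := ((2:R)^-1)%:C.
Lemma nc_hlf : nc hlf = 2^-1.
Proof. by rewrite /hlf ncR ger0_norm // invr_ge0 ler0n. Qed.
Lemma conj_hlf : conjc hlf = hlf.
Proof. exact: conjc_real. Qed.
Lemma hlf_twice (y : B) : hlf *: y + hlf *: y = y.
Proof.
rewrite -scalerDl /hlf -rmorphD.
have -> : (2:R)^-1 + 2^-1 = 1 by lra.
by rewrite scale1r.
Qed.

Fixpoint vseq (a : B) (k : nat) : B :=
  if k is k'.+1 then hlf *: (a + vseq a k' * vseq a k') else 0.

Lemma sqdiff (x y : B) : x * x - y * y = x * (x - y) + (x - y) * y.
Proof.
by rewrite mulrBr mulrBl addrA subrK.
Qed.

Lemma nrm_sqdiff {x y : B} {t : R} : nrm x <= t -> nrm y <= t ->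
  nrm (x * x - y * y) <= 2%:R * t * nrm (x - y).
Proof.
move=> hx hy; rewrite sqdiff.
apply: le_trans (nrmD _ _) _.
have h1 := nrmM x (x - y); have h2 := nrmM (x - y) y.
have := nrm_ge0 (x - y); have := nrm_ge0 x; have := nrm_ge0 y.
nra.
Qed.

Lemma sqrt_ex a : star a = a -> nrm a < 1 -> exists s, star s * s = 1 - a.
Proof.
move=> sa na.
set q := nrm a; have q0 : 0 <= q := nrm_ge0 a; rewrite -/q in na.
set t := (1 + q) / 2.
have t0 : 0 <= t by rewrite /t; lra.
have t1 : t < 1 by rewrite /t; lra.
have hv : forall k, nrm (vseq a k) <= t.
  elim=> [|k IH] /=; first by rewrite nrm0.
  rewrite nrmZ nc_hlf.
  have h1 := nrmD a (vseq a k * vseq a k).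
  have h2 := nrmM (vseq a k) (vseq a k).
  have h3 := nrm_ge0 (vseq a k).
  have h4 : nrm (vseq a k) * nrm (vseq a k) <= t * t by rewrite ler_pM.
  rewrite -/q in h1; rewrite /t in h4 *; nra.
have hs : forall k, star (vseq a k) = vseq a k.
  elim=> [|k IH] /=; first exact: star0.
  by rewrite starZ conj_hlf starD starM IH sa.
have hd : forall k, nrm (vseq a k.+1 - vseq a k) <= t ^+ k.
  elim=> [|k IH].
    rewrite /= subr0 mul0r addr0 nrmZ nc_hlf expr0 -/q; lra.
  have -> : vseq a k.+2 - vseq a k.+1 =
     hlf *: (vseq a k.+1 * vseq a k.+1 - vseq a k * vseq a k).
    by rewrite [vseq a k.+2]/= [in LHS]/= -scalerBr opprD addrACA subrr add0r.
  rewrite nrmZ nc_hlf.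
  have := nrm_sqdiff (hv k.+1) (hv k).
  rewrite exprS; have := nrm_ge0 (vseq a k.+1 * vseq a k.+1 - vseq a k * vseq a k).
  nra.
have hc : forall p k, nrm (vseq a (k + p) - vseq a k) * (1 - t) <= t ^+ k - t ^+ (k + p).
  elim=> [|p IH] k; first by rewrite addn0 subrr nrm0 mul0r subrr.
  have e : vseq a (k + p.+1) - vseq a k =
      (vseq a (k + p).+1 - vseq a (k + p)) + (vseq a (k + p) - vseq a k).
    by rewrite addnS addrA subrK.
  rewrite e.
  have h1 := nrmD (vseq a (k + p).+1 - vseq a (k + p)) (vseq a (k + p) - vseq a k).
  have h2 := hd (k + p).
  have h3 := IH k.
  rewrite addnS exprS.
  have h4 : 0 <= 1 - t by lra.
  have h5 := ler_wpM2r h4 h1.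
  nra.
have hc' : forall p k, nrm (vseq a (k + p) - vseq a k) * (1 - t) <= t ^+ k.
  move=> p k; apply: le_trans (hc p k) _.
  by rewrite lerBlDr lerDl exprn_ge0.
have cauchy : forall e : R, 0 < e -> exists N : nat, forall p q' : nat,
    (N <= p)%N -> (N <= q')%N -> nrm (vseq a p - vseq a q') < e.
  move=> e e0.
  have ep : 0 < e / 2 * (1 - t).
    apply: mulr_gt0; first by rewrite divr_gt0.
    by lra.
  have [N hN] := @pow_small R t (e / 2 * (1 - t)) t0 t1 ep.
  exists N => p q' hp hq.
  have bnd : forall r, (N <= r)%N -> nrm (vseq a r - vseq a N) < e / 2.
    move=> r hr; rewrite -(subnKC hr).
    have := hc' (r - N)%N N.
    have h1t : 0 < 1 - t by lra.
    move=> h; rewrite -(ltr_pM2r h1t); exact: le_lt_trans h hN.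
  have := bnd p hp; have := bnd q' hq.
  have := nrmD (vseq a p - vseq a N) (vseq a N - vseq a q').
  rewrite addrA subrK (nrmB (vseq a N)).
  lra.
have [l hl] := nrm_complete (vseq a) cauchy.
have small : forall x (c : R), 0 < c -> (forall d : R, 0 < d -> nrm x <= c * d) -> x = 0.
  move=> x c c0 hx; apply: nrm_small => e e0.
  have := hx (e / c) (divr_gt0 e0 c0).
  by rewrite mulrC -mulrA mulVf ?gt_eqF // mulr1.
have hl1 : l - hlf *: (a + l * l) = 0.
  apply: (small _ (1 + (t + nrm l))).
    have := nrm_ge0 l; lra.
  move=> d d0.
  have [N hN] := hl d d0.
  have hN0 := hN N (leqnn N).
  have hN1 := hN N.+1 (leqnSn N).
  have e : l - hlf *: (a + l * l) = (l - vseq a N.+1) +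
      hlf *: (vseq a N * vseq a N - l * l).
    by rewrite /= !scalerDr ?scalerBr !opprD !addrA subrK scalerN.
  rewrite e.
  apply: le_trans (nrmD _ _) _.
  rewrite nrmZ nc_hlf nrmB.
  have hh := nrm_sqdiff (x := vseq a N) (y := l) (t := Num.max t (nrm l)).
  have hm1 : nrm (vseq a N) <= Num.max t (nrm l) by rewrite le_max hv.
  have hm2 : nrm l <= Num.max t (nrm l) by rewrite le_max lexx orbT.
  have := hh hm1 hm2.
  have hmx : Num.max t (nrm l) <= t + nrm l.
    by rewrite ge_max lerDl nrm_ge0 lerDr t0.
  have := nrm_ge0 (vseq a N - l).
  have := nrm_ge0 (vseq a N * vseq a N - l * l).
  have := nrm_ge0 l.
  have hmx0 : 0 <= Num.max t (nrm l) by rewrite le_max t0.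
  have p1 : Num.max t (nrm l) * nrm (vseq a N - l) <= (t + nrm l) * d.
    by apply: ler_pM => //; [exact: nrm_ge0 | exact: ltW].
  move=> _ _ _ hsq; clearbody t.
  set M := Num.max t (nrm l) in hsq p1 *.
  set dl := nrm (vseq a N - l) in hsq p1 *.
  rewrite -mulrA in hsq; rewrite mulrDl mul1r.
  set P := M * dl in hsq p1; set Q := (t + nrm l) * d in p1 *.
  clearbody M dl P Q.
  lra.
have hl2 : star l - l = 0.
  apply: (small _ 2%:R); first by lra.
  move=> d d0.
  have [N hN] := hl d d0.
  have hN0 := hN N (leqnn N).
  have e : star l - l = star (l - vseq a N) + (vseq a N - l).
    by rewrite starB hs addrA subrK.
  rewrite e; apply: le_trans (nrmD _ _) _.
  rewrite nrm_star nrmB; lra.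
move/eqP: hl1; rewrite subr_eq0 => /eqP hl1.
move/eqP: hl2; rewrite subr_eq0 => /eqP hl2.
have two : l + l = a + l * l by rewrite {1 2}hl1 hlf_twice.
exists (1 - l).
rewrite starB star1 hl2 mulrBr mulr1 mulrBl mul1r.
have -> : a = l + l - l * l by rewrite two addrK.
by rewrite -addrA; congr (_ + _); rewrite !opprB opprD addrCA.
Qed.

Lemma scaleMM (a b : C) (x y : B) : (a *: x) * (b *: y) = (a * b) *: (x * y).
Proof. by rewrite -scalerAl -scalerAr scalerA. Qed.

Lemma conj_i : conjc ('i%C : C) = - 'i%C.
Proof. by apply/eqP; rewrite eq_complex /= oppr0 !eqxx. Qed.
Lemma conjcM (a b : C) : conjc (a * b) = conjc a * conjc b.
Proof. exact: rmorphM. Qed.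
Lemma conjcN (a : C) : conjc (- a) = - conjc a.
Proof. exact: rmorphN. Qed.
Lemma conjcD (a b : C) : conjc (a + b) = conjc a + conjc b.
Proof. exact: rmorphD. Qed.
Lemma conjc_sum (I : Type) (r : seq I) (F : I -> C) :
  conjc (\sum_(i <- r) F i) = \sum_(i <- r) conjc (F i).
Proof. by apply: (big_morph (fun a : C => conjc a) conjcD); rewrite conjc0. Qed.
Lemma realcM (a b : R) : (a * b)%:C = a%:C * b%:C :> C.
Proof. exact: rmorphM. Qed.
Lemma realcX (a : R) n : (a ^+ n)%:C = a%:C ^+ n :> C.
Proof. exact: rmorphXn. Qed.
Lemma ii : ('i%C : C) * 'i%C = -1.
Proof. by rewrite -expr2 sqr_i. Qed.

Section PosFun.
Variable om : B -> C.
Hypothesis omD : forall x y, om (x + y) = om x + om y.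
Hypothesis omZ : forall (a : C) x, om (a *: x) = a * om x.
Hypothesis om1 : om 1 = 1.
Hypothesis omP : forall z, 0 <= om (star z * z).

Lemma om0 : om 0 = 0.
Proof. by rewrite -(scale0r (0:B)) omZ mul0r. Qed.
Lemma omN x : om (- x) = - om x.
Proof. by rewrite -scaleN1r omZ mulN1r. Qed.
Lemma omB x y : om (x - y) = om x - om y.
Proof. by rewrite omD omN. Qed.

Lemma om_real {h} : star h = h -> om h \is Num.real.
Proof.
move=> sh.
have h1 := omP (1 + h).
have h2 := omP h.
rewrite starD star1 sh mulrDl !mulrDr !mul1r mulr1 !omD om1 in h1.
rewrite sh in h2.
have r1 := ger0_real h1; have r2 := ger0_real h2.
have r3 : om h + om h \is Num.real.
  have -> : om h + om h = (1 + om h + (om h + om (h * h))) - 1 - om (h * h) by ring.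
  by rewrite rpredB // rpredB // rpred1.
have -> : om h = (om h + om h) / 2%:R.
  by field; rewrite ?pnatr_eq0.
by rewrite rpredM // rpredV rpred_nat.
Qed.

Lemma om_le1 {a} : star a = a -> nrm a < 1 -> om a <= 1.
Proof.
move=> sa na; have [s hs] := @sqrt_ex a sa na.
by have := omP s; rewrite hs omB om1 subr_ge0.
Qed.

Lemma om_sa {h} : star h = h -> om h <= (nrm h)%:C.
Proof.
move=> sh.
have hr := om_real sh.
rewrite -(RRe_real hr) lecR.
apply/ler_addgt0Pr => e e0.
set c := nrm h + e.
have c0 : 0 < c by rewrite /c; have := nrm_ge0 h; lra.
set a := (c^-1)%:C *: h.
have sa : star a = a by rewrite /a starZ conjc_real sh.
have na : nrm a < 1.
  rewrite /a nrmZ ncR ger0_norm ?invr_ge0 ?ltW //.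
  by rewrite ltr_pdivrMl // mulr1 /c ltrDl.
have := om_le1 sa na.
rewrite /a omZ -{1}(RRe_real hr) -rmorphM -[1]/((1:R)%:C) lecR.
by rewrite ler_pdivrMl // mulr1.
Qed.

Lemma om_bound x : `|om x| <= (nrm x)%:C.
Proof.
set w := om x.
have [->|wn0] := eqVneq w 0; first by rewrite normr0 ler0c nrm_ge0.
set mu := `|w| / w.
have mu1 : `|mu| = 1 by rewrite /mu normrM normfV normr_id mulfV // normr_eq0.
set y := mu *: x.
have wy : om y = `|w| by rewrite /y omZ /mu mulrAC -mulrA mulfV // mulr1.
set hh := hlf *: (y + star y).
set kk := (hlf * - 'i%C) *: (y - star y).
have shh : star hh = hh by rewrite /hh starZ conj_hlf starD starK addrC.
have skk : star kk = kk.
  rewrite /kk starZ starB starK conjcM conjcN conj_hlf conj_i opprK.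
  by rewrite -opprB scalerN -scaleNr mulrN.
have ey : hh + 'i%C *: kk = y.
  rewrite /hh /kk scalerA mulrCA mulrN ii opprK mulr1 -scalerDr.
  by rewrite addrACA subrr addr0 scalerDr hlf_twice.
have hhE : hh = hlf *: (y + star y) by [].
clearbody hh kk.
have rh := om_real shh; have rk := om_real skk.
have eq1 : om hh = `|w|.
  have := wy; rewrite -ey omD omZ -(RRe_real rh) -(RRe_real rk).
  rewrite normcE' => /eqP; rewrite eq_complex /= !mul0r !mul1r !subr0 !addr0 !add0r.
  by case/andP => /eqP -> _.
rewrite -eq1; apply: le_trans (om_sa shh) _.
rewrite lecR hhE nrmZ nc_hlf.
have nmu : nc mu = 1 by apply: complexI; rewrite -normcE' mu1.
have := nrmD y (star y); rewrite nrm_star /y nrmZ nmu mul1r.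
lra.
Qed.
End PosFun.

Section Iso.
Variable N : nat.
Variables (Ph : B -> 'M[B]_N) (Phi : 'M[B]_N -> B).
Hypothesis Hiso : is_star_iso star Ph Phi.

Lemma PhD x y : Ph (x + y) = Ph x + Ph y.
Proof. by case: Hiso => -[h _] *; apply: h. Qed.
Lemma PhZ (a : C) x : Ph (a *: x) = map_mx (fun y : B => a *: y) (Ph x).
Proof. by case: Hiso => -[_ h] *; apply: h. Qed.
Lemma PhM x y : Ph (x * y) = Ph x *m Ph y.
Proof. by case: Hiso => _ h *; apply: h. Qed.
Lemma PhS x : Ph (star x) = mx_star star (Ph x).
Proof. by case: Hiso => _ _ h *; apply: h. Qed.
Lemma PhK : cancel Ph Phi.
Proof. by case: Hiso => _ _ _ []. Qed.
Lemma PhiK : cancel Phi Ph.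
Proof. by case: Hiso => _ _ _ []. Qed.
Lemma Ph1 : Ph 1 = 1%:M.
Proof. by case: Hiso. Qed.
Lemma Ph_inj : injective Ph.
Proof. exact: can_inj PhK. Qed.
Lemma Ph0 : Ph 0 = 0.
Proof. by apply: (addrI (Ph 0)); rewrite -PhD !addr0. Qed.

Local Notation ia := (GRing.in_alg B).

Definition adj {p q} (M : 'M[C]_(p, q)) : 'M[C]_(q, p) := \matrix_(i, j) conjc (M j i).

Lemma adj_mul p q r (M1 : 'M[C]_(p, q)) (M2 : 'M[C]_(q, r)) :
  adj (M1 *m M2) = adj M2 *m adj M1.
Proof.
apply/matrixP => i j; rewrite !mxE conjc_sum; apply: eq_bigr => k _.
by rewrite !mxE conjcM mulrC.
Qed.

Lemma adjK p q (M : 'M[C]_(p, q)) : adj (adj M) = M.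
Proof. by apply/matrixP => i j; rewrite !mxE conjcK. Qed.

Definition embed (Q : 'M[C]_N) : B := Phi (map_mx ia Q).

Lemma Ph_embed Q : Ph (embed Q) = map_mx ia Q.
Proof. exact: PhiK. Qed.

Lemma embedM Q1 Q2 : embed Q1 * embed Q2 = embed (Q1 *m Q2).
Proof. by apply: Ph_inj; rewrite PhM !Ph_embed map_mxM. Qed.

Lemma star_ia (a : C) : star (ia a) = ia (conjc a).
Proof. by rewrite /= starZ star1. Qed.

Lemma embedS Q : star (embed Q) = embed (adj Q).
Proof.
apply: Ph_inj; rewrite PhS !Ph_embed; apply/matrixP => i j.
by rewrite !mxE star_ia.
Qed.

Lemma embedD Q1 Q2 : embed (Q1 + Q2) = embed Q1 + embed Q2.
Proof.
apply: Ph_inj; rewrite PhD !Ph_embed; apply/matrixP => i j.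
by rewrite !mxE rmorphD.
Qed.

Lemma embedZ (a : C) Q : embed (a *: Q) = a *: embed Q.
Proof.
apply: Ph_inj; rewrite PhZ !Ph_embed; apply/matrixP => i j.
by rewrite !mxE /= scalerA.
Qed.

Lemma embed0 : embed 0 = 0.
Proof. by apply: Ph_inj; rewrite Ph0 Ph_embed map_mx0. Qed.

Lemma embed1 : embed 1%:M = 1.
Proof. by apply: Ph_inj; rewrite Ph1 Ph_embed map_mx1 rmorph1. Qed.

Lemma embed_sum (I : Type) (r : seq I) (F : I -> 'M[C]_N) :
  embed (\sum_(i <- r) F i) = \sum_(i <- r) embed (F i).
Proof. exact: (big_morph embed embedD embed0). Qed.


Definition S (v : 'cV[C]_N) : C := (adj v *m v) 0 0.

Lemma SE v : S v = \sum_k `|v k 0| ^+ 2.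
Proof.
rewrite /S mxE; apply: eq_bigr => k _; rewrite mxE normCK mulrC //.
Qed.

Lemma S_ge0 v : 0 <= S v.
Proof. by rewrite SE sumr_ge0 // => k _; rewrite exprn_ge0. Qed.

Lemma S_entry (v : 'cV[C]_N) (i : 'I_N) : `|v i 0| ^+ 2 <= S v.
Proof.
rewrite SE (bigD1 i) //= lerDl sumr_ge0 // => k _; exact: exprn_ge0.
Qed.

Lemma S_delta j : S (delta_mx j 0) = 1.
Proof.
rewrite SE (bigD1 j) //= big1 ?addr0.
  by rewrite mxE !eqxx normr1 expr1n.
by move=> k /negbTE kj; rewrite mxE kj normr0 expr0n.
Qed.

Lemma mx11E (A : 'M[C]_1) : A = (A 0 0)%:M.
Proof. exact: mx11_scalar. Qed.

Lemma proj_le1 (P : 'M[C]_N) : adj P = P -> P *m P = P -> nrm (embed P) <= 1.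
Proof.
move=> aP PP; apply: nrm_proj; first by rewrite embedS aP.
by rewrite embedM PP.
Qed.

Section Corner.
Variable t0 : 'I_N.
Local Notation e0 := (delta_mx t0 (0 : 'I_1) : 'cV[C]_N).

Lemma adj_e0 : adj e0 *m e0 = 1%:M.
Proof.
apply/matrixP => i j; rewrite !mxE (bigD1 t0) //= big1 ?addr0.
  by rewrite !mxE !ord1 !eqxx conjc_nat mulr1.
by move=> k /negbTE kt; rewrite !mxE kt /= mulr0.
Qed.

Lemma corner (s : 'M[C]_1) : (e0 *m s *m adj e0) t0 t0 = s 0 0.
Proof.
rewrite !mxE big_ord1 !mxE big_ord1 !mxE !ord1 !eqxx conjc_nat mulr1 mul1r.
by [].

Qed.

Lemma corner_proj (v : 'cV[C]_N) :
  (nrm (embed (e0 *m (adj v *m v) *m adj e0)))%:C <= S v.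
Proof.
rewrite [adj v *m v]mx11E -/(S v) mul_mx_scalar -scalemxAl embedZ nrmZC.
rewrite ger0_norm ?S_ge0 //.
have hp : nrm (embed (e0 *m adj e0)) <= 1.
  apply: proj_le1; first by rewrite adj_mul adjK.
  by rewrite mulmxA -(mulmxA e0) adj_e0 mulmx1.
have h := S_ge0 v.
rewrite -[X in _ <= X]mulr1; apply: ler_wpM2l => //.
by rewrite -[1]/((1:R)%:C) lecR.
Qed.

End Corner.

Lemma adj_delta i j : adj (delta_mx i j : 'M[C]_N) = delta_mx j i.
Proof. by apply/matrixP => k l; rewrite !mxE conjc_nat andbC. Qed.

Lemma nrm_delta i j : nrm (embed (delta_mx i j)) <= 1.
Proof.
set d := embed (delta_mx i j).
have e : nrm d ^+ 2 = nrm (embed (delta_mx i i)).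
  by rewrite -[nrm d]nrm_star -nrmC starK /d embedS embedM adj_delta mul_delta_mx.
have : nrm d ^+ 2 <= 1.
  rewrite e; apply: proj_le1; first by rewrite adj_delta.
  by rewrite mul_delta_mx.
have := nrm_ge0 d; nra.
Qed.

Lemma embed_bound (A : 'M[C]_N) (c : R) : 0 <= c ->
  (forall i j, `|A i j| <= c%:C) -> nrm (embed A) <= (N * N)%:R * c.
Proof.
move=> c0 hA.
rewrite {1}(matrix_sum_delta A) embed_sum.
apply: le_trans (nrm_sum _ _ _) _.
have -> : (N * N)%:R * c = \sum_(i < N) \sum_(j < N) c.
  by rewrite !sumr_const !card_ord -mulrnA mulr_natl.
apply: ler_sum => i _; rewrite embed_sum; apply: le_trans (nrm_sum _ _ _) _.
apply: ler_sum => j _; rewrite embedZ nrmZ.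
have hn : nc (A i j) <= c by rewrite -lecR -normcE'.
have := nrm_delta i j; have := nrm_ge0 (embed (delta_mx i j)); have := nc_ge0 (A i j).
nra.
Qed.

Lemma starX x k : star x = x -> star (x ^+ k) = x ^+ k.
Proof.
move=> sx; elim: k => [|k IH]; first by rewrite !expr0 star1.
by rewrite exprS starM IH sx -exprSr exprS.
Qed.

Lemma sa_pow x : star x = x -> forall k, nrm (x ^+ (2 ^ k)) = nrm x ^+ (2 ^ k).
Proof.
move=> sx; elim=> [|k IH]; first by rewrite !expr1.
rewrite expnSr !exprM -IH -nrmC starX // expr2 //.
Qed.

Lemma opbound (L : 'M[C]_N) (K : R) : 0 <= K ->
  (forall eta xi : 'cV[C]_N,
     `|(adj eta *m L *m xi) 0 0| ^+ 2 <= (K ^+ 2)%:C * S eta * S xi) ->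
  nrm (embed L) <= K.
Proof.
move=> K0 hb.
set K2 : C := (K ^+ 2)%:C.
have K20 : 0 <= K2 by rewrite /K2 ler0c exprn_ge0.
pose Bd (A : 'M[C]_N) (c : C) := forall v, S (A *m v) <= c * S v.
have cancel1 : forall (u v : C), 0 <= u -> 0 <= v -> u ^+ 2 <= K2 * v * u -> u <= K2 * v.
  move=> u v u0 v0 h.
  have [->|un] := eqVneq u 0; first by rewrite mulr_ge0.
  have up : 0 < u by rewrite lt_neqAle eq_sym un u0.
  by rewrite -(ler_pM2l up) -expr2 [u * _]mulrC.
have bdL : Bd L K2.
  move=> v; apply: cancel1; [exact: S_ge0 | exact: S_ge0 |].
  have := hb (L *m v) v; rewrite -mulmxA -/(S (L *m v)) ger0_norm ?S_ge0 //.
  by rewrite mulrAC.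
have bdLs : Bd (adj L) K2.
  move=> v; apply: cancel1; [exact: S_ge0 | exact: S_ge0 |].
  have := hb v (adj L *m v).
  have -> : adj v *m L *m (adj L *m v) = adj (adj L *m v) *m (adj L *m v).
    by rewrite adj_mul adjK.
  by rewrite -/(S _) ger0_norm ?S_ge0.
have bdM : forall A A' c c', 0 <= c -> Bd A c -> Bd A' c' -> Bd (A *m A') (c * c').
  move=> A A' c c' c0 hA hA' v; rewrite -mulmxA; apply: le_trans (hA _) _.
  by rewrite -mulrA; apply: ler_wpM2l.
set P := adj L *m L.
have bdP : Bd P (K2 * K2) := bdM _ _ _ _ K20 bdLs bdL.
have bdPj : forall j, Bd (P ^+ j) ((K2 * K2) ^+ j).
  elim=> [|j IH] v; first by rewrite !expr0 mul1r mul1mx.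
  rewrite exprS -mulmxE exprS.
  by apply: bdM => //; rewrite mulr_ge0.
have entry : forall (A : 'M[C]_N) c i j, Bd A c -> `|A i j| ^+ 2 <= c.
  move=> A c i j hA; have := hA (delta_mx j 0); rewrite S_delta mulr1 => h.
  apply: le_trans h; have := S_entry (A *m delta_mx j 0) i.
  by rewrite -colE mxE.
set Z := embed L; set Pb := star Z * Z.
have ePb : Pb = embed P by rewrite /Pb embedS embedM.
have sPb : star Pb = Pb by rewrite /Pb starM starK.
have pow : forall j, Pb ^+ j = embed (P ^+ j).
  elim=> [|j IH]; first by rewrite !expr0 embed1.
  by rewrite !exprS IH ePb embedM mulmxE.
have bnd : forall k, nrm Pb ^+ (2 ^ k) <= (N * N)%:R * (K ^+ 2) ^+ (2 ^ k).
  move=> k; rewrite -sa_pow // pow; apply: embed_bound; first by rewrite !exprn_ge0.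
  move=> i j.
  have h := entry _ _ i j (bdPj (2 ^ k)%N).
  rewrite -(@ler_pXn2r _ 2) // ?qualifE /= ?normr_ge0 // ?ler0c ?exprn_ge0 //.
  have -> : (K ^+ 2 ^+ (2 ^ k))%:C ^+ 2 = (K2 * K2) ^+ (2 ^ k).
    by rewrite realcX -/K2 -exprM -expr2 -exprM mulnC.
  exact: h.
have hP := @bootstrap R (nrm Pb) (K ^+ 2) ((N * N)%:R) (nrm_ge0 Pb) (exprn_ge0 2 K0) (ler0n _ (N * N)) bnd.
rewrite /Pb nrmC in hP.
exact: (@sq_le R (nrm Z) K (nrm_ge0 _) K0 hP).
Qed.

Section Phi.
Variable phi : B -> C.
Hypothesis phiD : forall x y, phi (x + y) = phi x + phi y.
Hypothesis phiZ : forall (a : C) x, phi (a *: x) = a * phi x.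
Hypothesis phi1 : phi 1 = 1.
Hypothesis phiP : forall z, 0 <= phi (star z * z).

Lemma phi0 : phi 0 = 0.
Proof. by rewrite -(scale0r (0:B)) phiZ mul0r. Qed.

Lemma phi_sum (I : Type) (r : seq I) (F : I -> B) :
  phi (\sum_(i <- r) F i) = \sum_(i <- r) phi (F i).
Proof. exact: (big_morph phi phiD phi0). Qed.

Lemma map_phi_l {p} (U : 'M[C]_(p, N)) (M : 'M[B]_N) :
  map_mx phi (map_mx ia U *m M) = U *m map_mx phi M.
Proof.
apply/matrixP => i j; rewrite !mxE phi_sum; apply: eq_bigr => k _.
by rewrite !mxE /= mulr_algl phiZ.
Qed.

Lemma map_phi_r {p} (M : 'M[B]_(p, N)) (V : 'M[C]_N) :
  map_mx phi (M *m map_mx ia V) = map_mx phi M *m V.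
Proof.
apply/matrixP => i j; rewrite !mxE phi_sum; apply: eq_bigr => k _.
by rewrite !mxE /= mulr_algr phiZ mulrC.
Qed.

Lemma bilin (t0 : 'I_N) b (eta xi : 'cV[C]_N) :
  `|(adj eta *m map_mx phi (Ph b) *m xi) 0 0| ^+ 2 <=
     (nrm b ^+ 2)%:C * S eta * S xi.
Proof.
set e0 : 'cV[C]_N := delta_mx t0 0.
set Rm := e0 *m adj eta.
set Cm := xi *m adj e0.
set x := embed Rm * b * embed Cm.
set om := fun z => phi (Ph z t0 t0).
have omD : forall x y, om (x + y) = om x + om y.
  by move=> x1 y1; rewrite /om PhD mxE phiD.
have omZ : forall (a : C) x, om (a *: x) = a * om x.
  by move=> a x1; rewrite /om PhZ mxE phiZ.
have om1 : om 1 = 1 by rewrite /om Ph1 mxE eqxx mulr1n phi1.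
have omP : forall z, 0 <= om (star z * z).
  move=> z; rewrite /om PhM PhS mxE phi_sum sumr_ge0 // => k _.
  by rewrite mxE.
have hb := @om_bound om omD omZ om1 omP x.
have ex : om x = (adj eta *m map_mx phi (Ph b) *m xi) 0 0.
  rewrite /om /x !PhM !Ph_embed.
  have := map_phi_r (map_mx ia Rm *m Ph b) Cm.
  rewrite map_phi_l => /matrixP /(_ t0 t0); rewrite mxE => ->.
  rewrite /Rm /Cm !mulmxA -(mulmxA e0) -(mulmxA e0) -/e0.
  exact: corner.
have hx : nrm x <= nrm (embed Rm) * nrm b * nrm (embed Cm).
  rewrite /x; apply: le_trans (nrmM _ _) _; apply: ler_wpM2r; first exact: nrm_ge0.
  exact: nrmM.
have hR : (nrm (embed Rm) ^+ 2)%:C <= S eta.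
  have e : nrm (embed Rm) ^+ 2 = nrm (embed (e0 *m (adj eta *m eta) *m adj e0)).
    rewrite -[nrm (embed Rm)]nrm_star -nrmC starK embedS embedM.
    by rewrite /Rm adj_mul adjK !mulmxA.
  rewrite e; exact: corner_proj.
have hC : (nrm (embed Cm) ^+ 2)%:C <= S xi.
  have e : nrm (embed Cm) ^+ 2 = nrm (embed (e0 *m (adj xi *m xi) *m adj e0)).
    rewrite -nrmC embedS embedM.
    by rewrite /Cm adj_mul adjK !mulmxA.
  rewrite e; exact: corner_proj.
rewrite -ex.
set nR := nrm (embed Rm); set nC := nrm (embed Cm); set nb := nrm b; set nx := nrm x.
have nR0 : 0 <= nR := nrm_ge0 _.
have nC0 : 0 <= nC := nrm_ge0 _.
have nb0 : 0 <= nb := nrm_ge0 _.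
have nx0 : 0 <= nx := nrm_ge0 _.
have c1 : `|om x| ^+ 2 <= (nR ^+ 2 * nb ^+ 2 * nC ^+ 2)%:C.
  apply: (@le_trans _ _ (nx ^+ 2)%:C).
    rewrite realcX !expr2; apply: ler_pM => //; exact: normr_ge0.
  rewrite lecR -!exprMn !expr2; apply: ler_pM => //.
have c2 : (nR ^+ 2 * nb ^+ 2 * nC ^+ 2)%:C <= S eta * (nb ^+ 2)%:C * S xi.
  have hR' : nR%:C * nR%:C <= S eta by rewrite -expr2 -realcX.
  have hC' : nC%:C * nC%:C <= S xi by rewrite -expr2 -realcX.
  rewrite !realcM ?realcX ?expr2.
  apply: ler_pM; [by rewrite !mulr_ge0 // ler0c | by rewrite mulr_ge0 // ler0c | | exact: hC'].
  apply: ler_pM; [by rewrite mulr_ge0 // ler0c | by rewrite mulr_ge0 // ler0c | exact: hR' | done].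
apply: le_trans c1 _; apply: le_trans c2 _.
by rewrite [S eta * _]mulrC.
Qed.


Definition Eb b := Phi (map_mx (fun x => (phi x)%:A) (Ph b)).

Lemma Eb_embed b : Eb b = embed (map_mx phi (Ph b)).
Proof. by rewrite /Eb /embed; congr Phi; apply/matrixP => i j; rewrite !mxE. Qed.

Lemma Eb_sub b1 b2 : Eb (b1 - b2) = Eb b1 - Eb b2.
Proof.
have PhN : forall x, Ph (- x) = - Ph x.
  by move=> x; apply: (addrI (Ph x)); rewrite -PhD !subrr Ph0.
have embN : forall Q, embed (- Q) = - embed Q.
  by move=> Q; rewrite -scaleN1r embedZ scaleN1r.
rewrite !Eb_embed PhD PhN.
have -> : map_mx phi (Ph b1 + - Ph b2) = map_mx phi (Ph b1) + - map_mx phi (Ph b2).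
  apply/matrixP => i j; rewrite !mxE phiD.
  by rewrite -scaleN1r phiZ mulN1r.
by rewrite embedD embN.
Qed.

Lemma Eb_fix Q : Eb (embed Q) = embed Q.
Proof.
rewrite /Eb Ph_embed /embed; congr Phi; apply/matrixP => i j; rewrite !mxE /=.
by rewrite phiZ phi1 mulr1.
Qed.

Lemma E_contr b : nrm (Phi (map_mx (fun x => (phi x)%:A) (Ph b))) <= nrm b.
Proof.
have [N0|Npos] := posnP N.
  have nope : forall i : 'I_N, False by move=> [i hi]; rewrite N0 in hi.
  have -> : map_mx (fun x => (phi x)%:A) (Ph b) = Ph b.
    by apply/matrixP => i; case: (nope i).
  by rewrite PhK.
set t0 := Ordinal Npos.
have -> : Phi (map_mx (fun x => (phi x)%:A) (Ph b)) = embed (map_mx phi (Ph b)).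
  by rewrite /embed; congr Phi; apply/matrixP => i j; rewrite !mxE.
apply: opbound; first exact: nrm_ge0.
move=> eta xi; exact: bilin t0 b eta xi.
Qed.

End Phi.
End Iso.

Section Psi.
Variable n : nat.
Variables (psi : B -> 'M[B]_n) (psiinv : 'M[B]_n -> B).
Hypothesis Hpsi : is_star_iso star psi psiinv.

Let pD := @PhD _ _ _ Hpsi.
Let pZ := @PhZ _ _ _ Hpsi.
Let pM := @PhM _ _ _ Hpsi.
Let pS := @PhS _ _ _ Hpsi.
Let pK := @PhK _ _ _ Hpsi.
Let piK := @PhiK _ _ _ Hpsi.
Let p1 := @Ph1 _ _ _ Hpsi.
Let p0 := @Ph0 _ _ _ Hpsi.

Lemma psi_sum (I : Type) (r : seq I) (F : I -> B) :
  psi (\sum_(i <- r) F i) = \sum_(i <- r) psi (F i).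
Proof. exact: (big_morph psi pD p0). Qed.

Local Notation g := (gI n).
Local Notation h := (hI n).

Lemma L_inv m X i j : psi_it psi m (psi_it_inv psiinv m X) i j = X i j.
Proof.
elim: m X i j => [|m IH] X /=; first by case; case.
case=> i a [j c] /=; rewrite IH piK mxE //.
Qed.

Lemma L_invK m b : psi_it_inv psiinv m (psi_it psi m b) = b.
Proof.
elim: m b => [|m IH] b //=.
have -> : (fun i j => psiinv (\matrix_(k, l) psi_it psi m.+1 b (i, k) (j, l))) =
          psi_it psi m b.
  apply: functional_extensionality => i; apply: functional_extensionality => j.
  have -> : (\matrix_(k, l) psi_it psi m.+1 b (i, k) (j, l)) = psi (psi_it psi m b i j).
    by apply/matrixP => k l; rewrite mxE.
  by rewrite pK.
exact: IH.
Qed.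

Lemma L_add m x y i j :
  psi_it psi m (x + y) i j = psi_it psi m x i j + psi_it psi m y i j.
Proof.
elim: m i j => [|m IH] //=.
case=> i a [j c] /=; by rewrite IH pD mxE.
Qed.

Lemma L_scale m (a : C) x i j :
  psi_it psi m (a *: x) i j = a *: psi_it psi m x i j.
Proof.
elim: m i j => [|m IH] //=.
case=> i k [j c] /=; by rewrite IH pZ mxE.
Qed.

Lemma L_star m x i j :
  psi_it psi m (star x) i j = star (psi_it psi m x j i).
Proof.
elim: m i j => [|m IH] //=.
case=> i k [j c] /=; by rewrite IH pS mxE.
Qed.

Lemma L_one m (t u : idxT n m) :
  psi_it psi m 1 (g m t) (g m u) = (t == u)%:R.
Proof.
elim: m t u => [|m IH] /=; first by case; case.
case=> t a [u c] /=; rewrite IH.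
have [tu|ntu] := eqVneq t u.
  by rewrite /= p1 mxE -tu xpair_eqE eqxx.
by rewrite /= mulr0n p0 mxE xpair_eqE (negbTE ntu).
Qed.

Lemma L_mul m x y (t u : idxT n m) :
  psi_it psi m (x * y) (g m t) (g m u) =
  \sum_(k : idxT n m) psi_it psi m x (g m t) (g m k) * psi_it psi m y (g m k) (g m u).
Proof.
elim: m t u => [|m IH] /=; first by move=> t u; rewrite (big_pred1 tt) // => -[].
case=> t a [u c] /=; rewrite IH psi_sum.
rewrite summxE.
rewrite (eq_bigr (fun k => \sum_(d : 'I_n) psi (psi_it psi m x (g m t) (g m k)) a d *
    psi (psi_it psi m y (g m k) (g m u)) d c)); last by move=> k _; rewrite pM mxE.
exact: (pair_bigA _ (fun k d => psi (psi_it psi m x (g m t) (g m k)) a d *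
    psi (psi_it psi m y (g m k) (g m u)) d c)).
Qed.


Definition evm {m} (i : 'I_#|idxT n m|) : idxT n m := enum_val i.
Definition erm {m} (t : idxT n m) : 'I_#|idxT n m| := enum_rank t.

Lemma evmK m : cancel (@evm m) (@erm m).
Proof. exact: enum_valK. Qed.
Lemma ermK m : cancel (@erm m) (@evm m).
Proof. exact: enum_rankK. Qed.

Definition PhMm m (b : B) : 'M[B]_#|idxT n m| :=
  \matrix_(i, j) psi_it psi m b (g m (evm i)) (g m (evm j)).
Definition PhiMm m (M : 'M[B]_#|idxT n m|) : B :=
  psi_it_inv psiinv m (fun i j => M (erm (h m i)) (erm (h m j))).

Lemma PhM_iso m : is_star_iso star (PhMm m) (PhiMm m).
Proof.
split.
- split=> [x y | a x]; apply/matrixP => i j; rewrite !mxE.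
    by rewrite L_add.
  by rewrite L_scale.
- move=> x y; apply/matrixP => i j; rewrite !mxE L_mul.
  rewrite (reindex (@evm m)) /=; last first.
    by exists (@erm m) => k _; [apply: evmK | apply: ermK].
  by apply: eq_bigr => k _; rewrite !mxE.
- by move=> x; apply/matrixP => i j; rewrite !mxE L_star.
- split.
    move=> b; rewrite /PhiMm.
    have -> : (fun i j => PhMm m b (erm (h m i)) (erm (h m j))) = psi_it psi m b.
      apply: functional_extensionality => i; apply: functional_extensionality => j.
      by rewrite mxE !ermK !hK.
    exact: L_invK.
  move=> M; apply/matrixP => i j; rewrite mxE /PhiMm L_inv !gK !evmK //.
- apply/matrixP => i j; rewrite !mxE L_one.
  by rewrite (inj_eq (can_inj (@evmK m))).
Qed.

Lemma kappa_E m (phi : B -> C) c :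
  kappa psiinv m (phi_it psi phi m c) =
  PhiMm m (map_mx (fun x => (phi x)%:A) (PhMm m c)).
Proof.
rewrite /kappa /PhiMm; congr (psi_it_inv psiinv m _).
apply: functional_extensionality => i; apply: functional_extensionality => j.
by rewrite !mxE !ermK !hK.
Qed.

Lemma kappa_embed m (x : idx n m -> idx n m -> C) :
  kappa psiinv m x =
  PhiMm m (map_mx (GRing.in_alg B) (\matrix_(i, j) x (g m (evm i)) (g m (evm j)))).
Proof.
rewrite /kappa /PhiMm; congr (psi_it_inv psiinv m _).
apply: functional_extensionality => i; apply: functional_extensionality => j.
by rewrite !mxE !ermK !hK.
Qed.

End Psi.
End Norm.

Theorem proposition3p9 (R : realType) (B : algType R[i]) (star : B -> B) (nrm : B -> R)
  (n : nat) (psi : B -> 'M[B]_n) (psiinv : 'M[B]_n -> B)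
  (A : B -> Prop) (phi : B -> R[i]) :
  is_unital_cstar star nrm ->
  is_star_iso star psi psiinv ->
  masa star A ->
  unital_hom_on A phi ->
  pos_contraction star nrm phi ->
  forall c : B, in_C nrm psiinv c ->
  forall e : R, 0 < e ->
  exists m : nat, (1 <= m)%N /\ nrm (kappa psiinv m (phi_it psi phi m c) - c) < e.
Proof.
move=> Hcs Hpsi _ Hhom Hpc c HC e e0.
case: Hpc => phiD phiZ phiP _.
case: Hhom => phi1 _.
have e2 : 0 < e / 2 by rewrite divr_gt0.
have [m [m1 [x hx]]] := HC (e / 2) e2.
exists m; split => //.
have Hiso := @PhM_iso R B star n psi psiinv Hpsi m.
rewrite kappa_E.
set Ph := PhMm R B n psi m in Hiso *.
set Phi := PhiMm R B n psiinv m in Hiso *.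
change (nrm (Eb R B _ Ph Phi phi c - c) < e).
have hk := kappa_embed R B n psiinv m x.
set d := kappa psiinv m x in hx hk.
have Ed : Eb R B _ Ph Phi phi d = d.
  by rewrite hk; exact: (@Eb_fix R B star _ Ph Phi Hiso phi phiZ phi1 _).
have -> : Eb R B _ Ph Phi phi c - c = Eb R B _ Ph Phi phi (c - d) + (d - c).
  by rewrite (@Eb_sub R B star _ Ph Phi Hiso phi phiD phiZ) Ed addrA subrK.
apply: le_lt_trans (@nrmD R B star nrm Hcs _ _) _.
have := @E_contr R B star nrm Hcs _ Ph Phi Hiso phi phiD phiZ phi1 phiP (c - d).
rewrite (@nrmB R B star nrm Hcs c d).
have := @nrm_ge0 R B star nrm Hcs (d - c).
rewrite /Eb; lra.
Qed.
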